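(* Let $G$ be a word-representable graph. Then $l(G \,\square\, K_2) \le 2\,l(G) + 3|G| - 2$.
   Context: All graphs are simple and undirected; $|G|$ denotes the number of vertices of $G$ and $K_n$ is the complete graph on $n$ vertices. Letters $x,y$ alternate in a word $w$ if deleting all other letters from $w$ yields $xyxy\ldots$ or $yxyx\ldots$ (of either parity). A word $w$ over $V(G)$ represents $G$ if every vertex occurs in $w$ and for all distinct $x,y$, $xy\in E(G)$ iff $x,y$ alternate in $w$; $G$ is word-representable if such a word exists, and $l(G)$ is the minimum length of a word representing $G$. The Cartesian product $G\,\square\,H$ has vertex set $V(G)\times V(H)$, with $(u,v)$ adjacent to $(u',v')$ iff either $u=u'$ and $vv'\in E(H)$, or $v=v'$ and $uu'\in E(G)$. *)

(* Defs.v *)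
From mathcomp Require Import all_boot.
Set Implicit Arguments. Unset Strict Implicit. Unset Printing Implicit Defensive.

Definition simple_graph (T : finType) (e : rel T) : Prop :=
  symmetric e /\ irreflexive e.

(* x and y alternate in w: after deleting all letters other than x and y,
   no two consecutive letters are equal (i.e. the result is xyxy... or yxyx...). *)
Definition alternate (T : eqType) (w : seq T) (x y : T) : bool :=
  sorted (fun a b => a != b) [seq z <- w | (z == x) || (z == y)].

Definition represents (T : finType) (e : rel T) (w : seq T) : Prop :=
  (forall x : T, x \in w) /\
  (forall x y : T, x != y -> (e x y <-> alternate w x y)).

Definition word_representable (T : finType) (e : rel T) : Prop :=
  exists w, represents e w.

Definition is_min_word_length (T : finType) (e : rel T) (n : nat) : Prop :=
  (exists w, represents e w /\ size w = n) /\
  (forall w, represents e w -> n <= size w).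

Definition complete_graph (n : nat) : rel 'I_n := fun i j => i != j.
Arguments complete_graph n : clear implicits.

Definition cartesian_product (T1 T2 : finType) (e1 : rel T1) (e2 : rel T2)
  : rel (T1 * T2)%type :=
  fun p q => ((p.1 == q.1) && e2 p.2 q.2) || ((p.2 == q.2) && e1 p.1 q.1).

(* Main.v *)
Require Import Defs.
From mathcomp Require Import all_boot zify.
From Stdlib Require Import Classical.
Set Implicit Arguments. Unset Strict Implicit. Unset Printing Implicit Defensive.

Fixpoint fo (T : eqType) (s : seq T) : seq T :=
  if s is x :: s' then x :: filter (predC1 x) (fo s') else [::].

Lemma mem_fo (T : eqType) (s : seq T) x : (x \in fo s) = (x \in s).
Proof.
elim: s => [|y s IH] //=; rewrite !inE mem_filter /= IH.
by case: eqVneq.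
Qed.

Lemma uniq_fo (T : eqType) (s : seq T) : uniq (fo s).
Proof.
elim: s => [|y s IH] //=; rewrite mem_filter /= eqxx /=.
exact: filter_uniq.
Qed.

Lemma filter_fo (T : eqType) (P : pred T) (s : seq T) :
  filter P (fo s) = fo (filter P s).
Proof.
elim: s => [|x s IH] //=; case Px: (P x) => /=.
  by rewrite -IH -!filter_predI; congr (_ :: _); apply: eq_filter => y /=; rewrite andbC.
rewrite -filter_predI -IH; apply: eq_in_filter => y _ /=.
by case Py: (P y) => //=; apply/eqP => yx; rewrite yx Px in Py.
Qed.

Lemma fo_const (T : eqType) (b : T) (s : seq T) :
  all (pred1 b) s -> s != [::] -> fo s = [:: b].
Proof.
case: s => [|x s] //= /andP[/eqP -> Hs] _; congr (_ :: _).
apply/eqP; rewrite -(negbK (_ == _)) -has_filter; apply/hasPn => y.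
by rewrite mem_fo => ys /=; rewrite (eqP (allP Hs y ys)) eqxx.
Qed.

Definition uvp (T : eqType) (u v : T) := fun z : T => (z == u) || (z == v).

Lemma other_uv (T : eqType) (u v a y : T) : u != v ->
  uvp u v a -> uvp u v y -> y != a -> y == (if a == u then v else u).
Proof.
rewrite /uvp => uv; case/orP => /eqP ->; case/orP => /eqP ->; rewrite ?eqxx //=.
by rewrite eq_sym => /negbTE ->.
Qed.

Lemma fo_two (T : eqType) (u v : T) (w : seq T) a t :
  u != v -> u \in w -> v \in w -> filter (uvp u v) w = a :: t ->
  exists b, [/\ b != a, b \in t, uvp u v b &
    filter (uvp u v) (fo w) = [:: a; b] /\
    (filter (uvp u v) (behead (fo w)) = [:: a; b] \/
     filter (uvp u v) (behead (fo w)) = [:: b])].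
Proof.
move=> uv uw vw Ht.
have aP : uvp u v a by have := mem_head a t; rewrite -Ht mem_filter => /andP[].
pose b := if a == u then v else u.
have ba : b != a.
  rewrite /b; case: ifP => [/eqP ->|au]; first by rewrite eq_sym.
  by move: aP; rewrite /uvp au /= => /eqP ->.
have bP : uvp u v b by rewrite /b /uvp; case: (a == u); rewrite eqxx ?orbT.
have bt : b \in t.
  have : b \in a :: t by rewrite -Ht mem_filter bP /b; case: (a == u).
  by rewrite inE (negbTE ba).
have Hf : filter (uvp u v) (fo w) = [:: a; b].
  rewrite filter_fo Ht /=; congr (_ :: _); rewrite filter_fo (@fo_const _ b) //.
    apply/allP => y; rewrite mem_filter => /andP[/= ya yt].
    have yP : uvp u v y.
      have : y \in a :: t by rewrite inE yt orbT.
      by rewrite -Ht mem_filter => /andP[].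
    by apply: other_uv.
  by apply/eqP => /(congr1 (fun s => b \in s)); rewrite mem_filter /= ba bt.
exists b; split => //; split => //.
move: Hf; case: w Ht uw vw => [|x w'] // Ht _ _ /=.
case: ifP => xP Hf; last by left.
by right; case: Hf.
Qed.

Definition o0 : 'I_2 := @Ordinal 2 0 isT.
Definition o1 : 'I_2 := @Ordinal 2 1 isT.

Lemma I2 (i : 'I_2) : i = o0 \/ i = o1.
Proof. by case: i => [[|[|m]] H]; [left; apply/eqP|right; apply/eqP|]. Qed.

Definition Wd (T : finType) (w : seq T) : seq (T * 'I_2) :=
  flatten [seq [:: (x, o1); (x, o0)] | x <- behead (fo w)] ++
  [seq (x, o1) | x <- fo w] ++
  flatten [seq [:: (x, o0); (x, o1)] | x <- w].

Lemma flatten_opt (A B : Type) (Q : pred A) (g : A -> B) (L : seq A) :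
  flatten [seq (if Q x then [:: g x] else [::]) | x <- L] = map g (filter Q L).
Proof. by elim: L => [|x L IH] //=; case: (Q x) => /=; rewrite IH. Qed.

Lemma filter_pair (T : eqType) (u v x : T) (i j k1 k2 : 'I_2) : u != v -> k1 != k2 ->
  filter (fun z => (z == (u, i)) || (z == (v, j))) [:: (x, k1); (x, k2)] =
  if uvp u v x then [:: (x, if x == u then i else j)] else [::].
Proof.
move=> uv k12; rewrite /uvp /=.
case: (eqVneq x u) => [->|xu]; first rewrite (negbTE uv).
  case: (I2 i) => ->; case: (I2 j) => ->; case: (I2 k1) k12 => ->; case: (I2 k2) => -> //=;
  by rewrite !xpair_eqE !eqxx /= ?(negbTE uv) ?andbF.
case: (eqVneq x v) => [->|xv] /=.
  case: (I2 i) => ->; case: (I2 j) => ->; case: (I2 k1) k12 => ->; case: (I2 k2) => -> //=;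
  by rewrite !xpair_eqE !eqxx /= ?(negbTE uv) ?andbF ?(negbTE xu) ?(eq_sym v u) ?(negbTE uv).
by rewrite !xpair_eqE (negbTE xu) (negbTE xv).
Qed.

Lemma filterW_neq (T : finType) (w : seq T) (u v : T) (i j : 'I_2) : u != v ->
  filter (fun z => (z == (u, i)) || (z == (v, j))) (Wd w) =
  map (fun x => (x, if x == u then i else j)) (filter (uvp u v) (behead (fo w))) ++
  map (fun x => (x, o1)) (filter (fun x => ((x == u) && (i == o1)) || ((x == v) && (j == o1))) (fo w)) ++
  map (fun x => (x, if x == u then i else j)) (filter (uvp u v) w).
Proof.
move=> uv; rewrite /Wd !filter_cat !filter_flatten -!map_comp.
rewrite (eq_map (fun x => filter_pair x i j uv (isT : o1 != o0))).
rewrite (eq_map (fun x => filter_pair x i j uv (isT : o0 != o1))).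
rewrite !flatten_opt filter_map; congr (_ ++ (_ ++ _)).
congr map; apply: eq_filter => x /=; rewrite !xpair_eqE.
by rewrite (eq_sym i) (eq_sym j).
Qed.

Definition neqr (T : eqType) := fun a b : T => a != b.

Lemma sorted_pair (T : eqType) (i : 'I_2) (s : seq T) :
  sorted (fun a b => a != b) (map (fun x => (x, i)) s) = sorted (fun a b => a != b) s.
Proof.
rewrite sorted_map; case: s => //= x s; apply: eq_path => a b /=.
by rewrite xpair_eqE eqxx andbT.
Qed.

Lemma adj_break (T : eqType) (A B : seq T) x :
  sorted (fun a b => a != b) (A ++ x :: x :: B) = false.
Proof.
elim: A => [|y A IH] /=; first by rewrite eqxx.
by apply/negP => /path_sorted; rewrite IH.
Qed.

Lemma rep_same (T : finType) (w : seq T) (u : T) (i j : 'I_2) :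
  u \in w -> i != j -> alternate (Wd w) (u, i) (u, j).
Proof.
move=> uw ij; rewrite /alternate.
have -> : [seq z <- Wd w | (z == (u, i)) || (z == (u, j))] =
          [seq z <- Wd w | z.1 == u].
  apply: eq_filter => [[x k]] /=; rewrite !xpair_eqE -andb_orr.
  case: (x == u) => //=.
  by case: (I2 i) ij => ->; case: (I2 j) => ->; case: (I2 k) => ->.
rewrite /Wd !filter_cat !filter_flatten -!map_comp filter_map.
have E1 : forall k1 k2 : 'I_2, (fun x => [seq z <- [:: (x, k1); (x, k2)] | z.1 == u]) =1
     (fun x => if x == u then [:: (x, k1); (x, k2)] else [::]).
  by move=> k1 k2 x /=; case: (x == u).
rewrite (eq_map (E1 _ _)) (eq_map (E1 _ _)).
have E2 : forall (L : seq T) (k1 k2 : 'I_2),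
  flatten [seq (if x == u then [:: (x, k1); (x, k2)] else [::]) | x <- L] =
  flatten [seq [:: (u, k1); (u, k2)] | x <- filter (pred1 u) L].
  by move=> L k1 k2; elim: L => [|x L IH] //=; case: eqVneq => [->|] //=; rewrite IH.
rewrite !E2.
have Hfo : uniq (fo w) by apply: uniq_fo.
have -> : [seq x <- fo w | preim (pair^~ o1) (fun z => z.1 == u) x] = [:: u].
  by rewrite -(filter_pred1_uniq Hfo) ?mem_fo //; apply: eq_filter => x /=.
have Hcyc : forall L : seq T, sorted (fun a b => a != b)
   ((u, o1) :: flatten [seq [:: (u, o0); (u, o1)] | _ <- L]).
  elim=> [|x L IH] //=; rewrite /= in IH; by rewrite !xpair_eqE eqxx IH.
have : u \in filter (pred1 u) w by rewrite mem_filter /= eqxx.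
case: (filter (pred1 u) w) => [|y L] // _.
have [H|H] : filter (pred1 u) (behead (fo w)) = [::] \/
             filter (pred1 u) (behead (fo w)) = [:: u].
  have Hb : uniq (behead (fo w)) by case: (fo w) Hfo => //= x s /andP[].
  case: (boolP (u \in behead (fo w))) => ub; last first.
    left; apply/eqP; rewrite -(negbK (_ == _)) -has_filter; apply/hasPn => x xb /=.
    by apply/eqP => xu; rewrite -xu xb in ub.
  by right; apply: filter_pred1_uniq.
- by rewrite H /=; apply: (Hcyc (y :: L)).
- by rewrite H /= !xpair_eqE eqxx /=; exact: (Hcyc L).
Qed.

Lemma map_same (T : eqType) (u : T) (k : 'I_2) (s : seq T) :
  map (fun x => (x, if x == u then k else k)) s = map (fun x => (x, k)) s.
Proof. by apply: eq_map => x; rewrite if_same. Qed.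

Lemma cross_break (T : eqType) (g : T -> T * 'I_2) (a b c : T) (Lb t : seq T) :
  (Lb = [:: a; b] \/ Lb = [:: b]) -> (c = a \/ c = b) ->
  sorted (fun x y => x != y) (map g Lb ++ [:: g c] ++ g a :: map g t) = false.
Proof.
move=> HL [->|->]; first exact: adj_break.
by case: HL => ->; [apply: (adj_break [:: g a]) | apply: (adj_break [::])].
Qed.

Lemma ab_cover (T : eqType) (u v a b : T) : u != v -> uvp u v a -> b != a -> uvp u v b ->
  (u = a /\ v = b) \/ (u = b /\ v = a).
Proof.
rewrite /uvp => uv; case/orP => /eqP -> ba; case/orP => /eqP Hb; subst b;
  rewrite ?eqxx in ba => //; [left|right] => //.
Qed.

Lemma rep_neq (T : finType) (e : rel T) (w : seq T) (u v : T) (i j : 'I_2) :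
  represents e w -> u != v ->
  ((i == j) && e u v <-> alternate (Wd w) (u, i) (v, j)).
Proof.
move=> [Hall Hrep] uv.
have Hr := Hrep u v uv.
have : u \in filter (uvp u v) w by rewrite mem_filter /uvp eqxx Hall.
case Ht: (filter (uvp u v) w) => [|a t] // _.
have [b [ba bt bP [Hf Hb]]] := fo_two uv (Hall u) (Hall v) Ht.
have aP : uvp u v a by have := mem_head a t; rewrite -Ht mem_filter => /andP[].
have Ealt : alternate w u v = sorted (fun a b => a != b) (a :: t).
  by rewrite -Ht.
rewrite Ealt in Hr.
rewrite /alternate filterW_neq // Ht.
have ab : a != b by rewrite eq_sym.
case: (I2 i) => ->; case: (I2 j) => -> /=.
- have -> : [seq x <- fo w | (x == u) && (o0 == o1) || (x == v) && (o0 == o1)] = [::].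
    by rewrite (@eq_filter _ _ pred0) ?filter_pred0 // => x; case: (x == u); case: (x == v).
  rewrite !map_same (_ : map _ [::] = [::]) // cat0s if_same.
  rewrite (_ : (a, o0) :: [seq (x, o0) | x <- t] = [seq (x, o0) | x <- a :: t]) // -map_cat sorted_pair.
  by case: Hb => ->; rewrite /= ?ba ?ab /=; exact: Hr.
- have -> : [seq x <- fo w | (x == u) && (o0 == o1) || (x == v) && (o1 == o1)] = [:: v].
    rewrite -(filter_pred1_uniq (uniq_fo w) (_ : v \in fo w)) ?mem_fo //.
    by apply: eq_filter => x /=; case: (x == u); case: (x == v).
  have HH := @cross_break _ (fun x => (x, if x == u then o0 else o1)) _ _ v _ t Hb.
  have Hc : v = a \/ v = b by case: (ab_cover uv aP ba bP) => [[_ ->]|[_ ->]]; [right|left].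
  split => // H; rewrite -(HH Hc); move: H; rewrite /= (negbTE (_ : v != u)) // eq_sym //.
- have -> : [seq x <- fo w | (x == u) && (o1 == o1) || (x == v) && (o0 == o1)] = [:: u].
    rewrite -(filter_pred1_uniq (uniq_fo w) (_ : u \in fo w)) ?mem_fo //.
    by apply: eq_filter => x /=; case: (x == u); case: (x == v).
  have HH := @cross_break _ (fun x => (x, if x == u then o1 else o0)) _ _ u _ t Hb.
  have Hc : u = a \/ u = b by case: (ab_cover uv aP ba bP) => [[-> _]|[-> _]]; [left|right].
  split => // H; rewrite -(HH Hc); move: H; rewrite /= eqxx //.
- have -> : [seq x <- fo w | (x == u) && (o1 == o1) || (x == v) && (o1 == o1)] = filter (uvp u v) (fo w).
    by apply: eq_filter => x; rewrite /uvp; case: (x == u); case: (x == v).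
  rewrite !map_same Hf if_same.
  rewrite (_ : (a, o1) :: [seq (x, o1) | x <- t] = [seq (x, o1) | x <- a :: t]) // -!map_cat sorted_pair.
  by case: Hb => ->; rewrite /= ?ba ?ab /=; exact: Hr.
Qed.

Lemma repW (T : finType) (e : rel T) (w : seq T) :
  represents e w -> represents (cartesian_product e (complete_graph 2)) (Wd w).
Proof.
move=> Hw; have [Hall _] := Hw; split.
- move=> [x k]; rewrite /Wd !mem_cat; apply/orP; right; apply/orP; right.
  by apply/flatten_mapP; exists x => //; case: (I2 k) => ->; rewrite !inE eqxx ?orbT.
- move=> [u i] [v j] pq; rewrite /cartesian_product /complete_graph /=.
  case: (eqVneq u v) pq => [<-|uv] pq /=.
  + have ij : i != j by apply: contra pq => /eqP ->.
    rewrite ij /=; split => // _; exact: rep_same.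
  + exact: rep_neq.
Qed.

Lemma size_flat2 (A B : Type) (f g : A -> B) (L : seq A) :
  size (flatten [seq [:: f x; g x] | x <- L]) = 2 * size L.
Proof. by elim: L => [|x L IH] //=; rewrite IH mulnS. Qed.

Lemma size_fo_card (T : finType) (w : seq T) :
  (forall x : T, x \in w) -> size (fo w) = #|T|.
Proof.
move=> Hall; rewrite -(card_uniqP (uniq_fo w)).
by apply: eq_card => x; rewrite mem_fo Hall.
Qed.

Lemma size_Wd (T : finType) (w : seq T) :
  (forall x : T, x \in w) -> size (Wd w) <= 2 * size w + 3 * #|T| - 2.
Proof.
move=> Hall; rewrite /Wd !size_cat !size_flat2 size_map size_behead (size_fo_card Hall).
case: w Hall => [|x w] Hall.
  by rewrite -(size_fo_card Hall).
have : 0 < #|T| by rewrite -(size_fo_card Hall).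
lia.
Qed.

Lemma min_exists (V : finType) (E : rel V) (k : nat) :
  (exists W, represents E W /\ size W = k) ->
  exists m, is_min_word_length E m /\ m <= k.
Proof.
elim/ltn_ind: k => k IH [W [HW HS]].
case: (classic (exists W', represents E W' /\ size W' < k)) => [[W' [HW' Hs']]|Hn].
  have [m [Hm Hmk]] := IH _ Hs' (ex_intro _ W' (conj HW' erefl)).
  by exists m; split => //; apply: leq_trans Hmk (ltnW Hs').
exists k; split => //; split; first by exists W.
move=> W' HW'; rewrite leqNgt; apply/negP => H; apply: Hn; by exists W'.
Qed.

Unset Implicit Arguments.
Set Strict Implicit.

Theorem mainTheorem4 (T : finType) (e : rel T) :
  simple_graph e -> word_representable e ->
  forall n : nat, is_min_word_length e n ->
  exists m : nat,
    is_min_word_length (cartesian_product e (complete_graph 2)) m /\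
    m <= 2 * n + 3 * #|T| - 2.
Proof.
move=> _ _ n [[w [Hw Hs]] _].
have [m [Hm Hmk]] := min_exists (ex_intro _ (Wd w) (conj (repW Hw) erefl)).
exists m; split => //; apply: leq_trans Hmk _.
by rewrite -Hs; apply: size_Wd; case: Hw.
Qed.
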